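(* With the notation below, the exact sequence of $G$-spaces $$0\to\ell_2(T)\to\ell_2(T)\oplus\ell_2(T)\to\ell_2(T)\to0,$$ where $G=\mathrm{Aut}(T)$ acts on both end spaces by $u$ and on the middle space by $\lambda(g)=\begin{pmatrix}u(g)&u(g)L-Lu(g)\\0&u(g)\end{pmatrix}$, does not $G$-split (there is no bounded linear $G$-equivariant right inverse of the quotient map, equivalently no bounded $G$-equivariant projection onto the first summand), although it splits as an exact sequence of Banach spaces.
   Context: $F_\infty$ is the free group on generators $a_1,a_2,\dots$; $T$ is its Cayley graph (a tree, vertices the reduced words, rooted at the empty word $\emptyset$); for $t\ne\emptyset$, $\hat t$ is $t$ with its last letter deleted. $G=\mathrm{Aut}(T)$ is the group of graph automorphisms of $T$, acting by $u(g)x=(x(g^{-1}t))_{t\in T}$ on $\mathbb C^T$, $\ell_1(T)$, $\ell_2(T)$. $L:\ell_1(T)\to\ell_1(T)$ is given by $Le_t=e_{\hat t}$ ($t\ne\emptyset$), $Le_\emptyset=0$. It is known (Pytlik–Szwarc) that $u(g)L-Lu(g)$ extends to a bounded operator on $\ell_2(T)$ of norm at most $2$, so $\lambda$ is a bounded representation on $\ell_2(T)\oplus\ell_2(T)$. *)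

(* Defs.v *)
From Stdlib Require Import Reals List.
Import ListNotations.
Open Scope R_scope.

Definition Cx : Type := (R * R)%type.
Definition C0 : Cx := (0, 0).
Definition Cadd (z w : Cx) : Cx := (fst z + fst w, snd z + snd w).
Definition Csub (z w : Cx) : Cx := (fst z - fst w, snd z - snd w).
Definition Cmul (z w : Cx) : Cx :=
  (fst z * fst w - snd z * snd w, fst z * snd w + snd z * fst w).
Definition Cnorm2 (z : Cx) : R := fst z * fst z + snd z * snd z.

(** * The tree T: reduced words in the generators a_1, a_2, ... of F_infinity *)
(** A letter (i, b) is a_i if b = true and a_i^{-1} if b = false. *)
Definition letter : Type := (nat * bool)%type.
Definition inv_pair (a b : letter) : bool :=
  Nat.eqb (fst a) (fst b) && xorb (snd a) (snd b).
Fixpoint reducedb (w : list letter) : bool :=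
  match w with
  | a :: ((b :: _) as w') => negb (inv_pair a b) && reducedb w'
  | _ => true
  end.
(** Vertices of T (words read left to right; the last letter is the rightmost). *)
Definition T : Type := { w : list letter | reducedb w = true }.
Definition word (t : T) : list letter := proj1_sig t.
Definition root : T := exist _ [] eq_refl.

Definition letter_eq_dec : forall a b : letter, {a = b} + {a <> b}.
Proof. decide equality; [apply Bool.bool_dec | apply PeanoNat.Nat.eq_dec]. Defined.
Definition word_eqb (v w : list letter) : bool :=
  if list_eq_dec letter_eq_dec v w then true else false.

Definition parentb (s t : T) : bool :=
  word_eqb (word s) (removelast (word t)) &&
  negb (match word t with [] => true | _ => false end).
Definition parent (s t : T) : Prop := parentb s t = true.
Definition adj (s t : T) : Prop := parent s t \/ parent t s.

Definition is_aut (g h : T -> T) : Prop :=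
  (forall t, g (h t) = t) /\ (forall t, h (g t) = t) /\
  (forall s t, adj s t <-> adj (g s) (g t)).

Definition V : Type := T -> Cx.
Definition vadd (x y : V) : V := fun t => Cadd (x t) (y t).
Definition vscale (c : Cx) (x : V) : V := fun t => Cmul c (x t).

Definition lsum (f : T -> R) (l : list T) : R := fold_right (fun t acc => f t + acc) 0 l.
Definition Csum (f : T -> Cx) (l : list T) : Cx := fold_right (fun t acc => Cadd (f t) acc) C0 l.

(** [sqsum_le x M] : ||x||_2^2 <= M  (the squared l_2 norm is the sup of finite partial sums). *)
Definition sqsum_le (x : V) (M : R) : Prop :=
  forall l : list T, NoDup l -> lsum (fun t => Cnorm2 (x t)) l <= M.
Definition l2 (x : V) : Prop := exists M, sqsum_le x M.
(** Hilbert direct sum l_2 (+) l_2 : ||x||^2 + ||y||^2 <= M *)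
Definition sqsum2_le (p : V * V) (M : R) : Prop :=
  forall l1 l2 : list T, NoDup l1 -> NoDup l2 ->
    lsum (fun t => Cnorm2 (fst p t)) l1 + lsum (fun t => Cnorm2 (snd p t)) l2 <= M.

Definition linear_l2 (A : V -> V) : Prop :=
  (forall x y, l2 x -> l2 y -> forall s, A (vadd x y) s = Cadd (A x s) (A y s)) /\
  (forall c x, l2 x -> forall s, A (vscale c x) s = Cmul c (A x s)).
Definition bounded_l2 (A : V -> V) : Prop :=
  exists K, forall x M, sqsum_le x M -> sqsum_le (A x) (K * M).

Definition linear_l2_2 (A : V -> V * V) : Prop :=
  linear_l2 (fun x => fst (A x)) /\ linear_l2 (fun x => snd (A x)).
Definition bounded_l2_2 (A : V -> V * V) : Prop :=
  exists K, forall x M, sqsum_le x M -> sqsum2_le (A x) (K * M).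

(** u(g) x = x o g^{-1} *)
Definition ug (h : T -> T) (x : V) : V := fun s => x (h s).

(** L on finitely supported vectors: L e_t = e_{\hat t}, L e_root = 0.
    For x supported in the duplicate-free list l: (L x)(s) = sum_{t in l, \hat t = s} x t. *)
Definition supported_in (x : V) (l : list T) : Prop := forall t, ~ In t l -> x t = C0.
Definition Lfs (l : list T) (x : V) : V :=
  fun s => Csum (fun t => if parentb s t then x t else C0) l.

(** [D g h] is the (Pytlik–Szwarc) bounded extension to l_2 of u(g)L - L u(g),
    g an automorphism with inverse h: it is linear, bounded on l_2 and agrees with
    u(g)L - Lu(g) on finitely supported vectors (a dense subspace, so the
    extension is unique). *)
Definition commutator_ext (D : (T -> T) -> (T -> T) -> V -> V) : Prop :=
  forall g h, is_aut g h ->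
    linear_l2 (D g h) /\ bounded_l2 (D g h) /\
    (forall (x : V) (l : list T), NoDup l -> supported_in x l ->
       forall s, D g h x s = Csub (ug h (Lfs l x) s) (Lfs (map g l) (ug h x) s)).

Definition lam (D : (T -> T) -> (T -> T) -> V -> V) (g h : T -> T) (p : V * V) : V * V :=
  (vadd (ug h (fst p)) (D g h (snd p)), ug h (snd p)).

Definition bounded_right_inverse (Rm : V -> V * V) : Prop :=
  linear_l2_2 Rm /\ bounded_l2_2 Rm /\ (forall y, l2 y -> forall s, snd (Rm y) s = y s).

Definition equivariant (D : (T -> T) -> (T -> T) -> V -> V) (Rm : V -> V * V) : Prop :=
  forall g h, is_aut g h -> forall y, l2 y -> forall s,
    fst (lam D g h (Rm y)) s = fst (Rm (ug h y)) s /\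
    snd (lam D g h (Rm y)) s = snd (Rm (ug h y)) s.

(* Main.v *)
Require Import Defs.
From Stdlib Require Import Reals List.
From Stdlib Require Import ZArith Lra Lia FinFun FunctionalExtensionality Eqdep_dec.
Import ListNotations.
Open Scope R_scope.
Arguments letter_eq_dec : simpl never.

Lemma Teq (s t : T) : word s = word t -> s = t.
Proof.
  destruct s as [ws ps], t as [wt pt]; simpl; intros ->. f_equal.
  apply UIP_dec. exact Bool.bool_dec.
Qed.

Definition T_eq_dec (s t : T) : {s = t} + {s <> t}.
Proof.
  destruct (list_eq_dec letter_eq_dec (word s) (word t)) as [e|n].
  - left; apply Teq; exact e.
  - right; intro H; apply n; rewrite H; reflexivity.
Defined.

Definition phi (i j : nat) (a : letter) : letter :=
  let (k, b) := a in
  if Nat.eqb k i then (j, negb b) else if Nat.eqb k j then (i, negb b) else (k, b).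

Lemma phi_inv i j a : i <> j -> phi i j (phi i j a) = a.
Proof.
  intros Hij; destruct a as [k b]; unfold phi.
  destruct (Nat.eqb k i) eqn:E1.
  - apply PeanoNat.Nat.eqb_eq in E1; subst.
    destruct (Nat.eqb j i) eqn:E2; [apply PeanoNat.Nat.eqb_eq in E2; lia|].
    rewrite PeanoNat.Nat.eqb_refl, Bool.negb_involutive; reflexivity.
  - destruct (Nat.eqb k j) eqn:E2.
    + rewrite PeanoNat.Nat.eqb_refl, Bool.negb_involutive.
      apply PeanoNat.Nat.eqb_eq in E2; subst; reflexivity.
    + rewrite E1, E2; reflexivity.
Qed.

Lemma phi_eq i j a b : i <> j -> phi i j a = b <-> a = phi i j b.
Proof.
  intros H; split; intros E; [rewrite <- E | rewrite E]; rewrite phi_inv; auto.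
Qed.

Lemma inv_pair_iff a b : inv_pair a b = true <-> b = (fst a, negb (snd a)).
Proof.
  destruct a as [k b1], b as [l b2]; unfold inv_pair; simpl.
  rewrite Bool.andb_true_iff, PeanoNat.Nat.eqb_eq.
  destruct b1, b2; simpl; split; intros H; try (destruct H; subst; congruence);
    try (inversion H; subst; auto).
Qed.

Lemma phi_neg i j k b : phi i j (k, negb b) = (fst (phi i j (k, b)), negb (snd (phi i j (k, b)))).
Proof.
  unfold phi. destruct (Nat.eqb k i); [reflexivity|]. destruct (Nat.eqb k j); reflexivity.
Qed.

Lemma phi_inv_pair i j a b : i <> j -> inv_pair (phi i j a) (phi i j b) = inv_pair a b.
Proof.
  intros H.
  destruct (inv_pair a b) eqn:E.
  - apply inv_pair_iff in E. apply inv_pair_iff. subst b. destruct a as [k b1].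
    simpl. apply phi_neg.
  - destruct (inv_pair (phi i j a) (phi i j b)) eqn:E2; [|reflexivity].
    apply inv_pair_iff in E2. rewrite <- E. symmetry. apply inv_pair_iff.
    destruct a as [k b1]. rewrite <- phi_neg in E2.
    apply (f_equal (phi i j)) in E2. rewrite !phi_inv in E2 by auto. exact E2.
Qed.

Lemma red_map i j w : i <> j -> reducedb (map (phi i j) w) = reducedb w.
Proof.
  intros H. induction w as [|a w IH]; [reflexivity|].
  destruct w as [|b w]; [reflexivity|].
  change (negb (inv_pair (phi i j a) (phi i j b)) && reducedb (map (phi i j) (b :: w))
          = negb (inv_pair a b) && reducedb (b :: w))%bool.
  rewrite IH, phi_inv_pair by auto. reflexivity.
Qed.

Lemma red_tail a w : reducedb (a :: w) = true -> reducedb w = true.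
Proof.
  destruct w; [reflexivity|]. simpl. rewrite Bool.andb_true_iff. tauto.
Qed.

Definition gw (i j : nat) (w : list letter) : list letter :=
  match w with
  | a :: w' => if letter_eq_dec a (i, true) then
      match w' with
      | b :: v => if letter_eq_dec b (j, true) then map (phi i j) v
                  else (i, true) :: map (phi i j) w'
      | [] => (i, true) :: map (phi i j) w'
      end
    else (i, true) :: (j, true) :: map (phi i j) w
  | [] => (i, true) :: (j, true) :: map (phi i j) w
  end.

Lemma gw_red i j w : i <> j -> reducedb w = true -> reducedb (gw i j w) = true.
Proof.
  intros Hij Hw. destruct w as [|a w'].
  - simpl. unfold inv_pair; simpl. rewrite Bool.andb_false_r. reflexivity.
  - simpl gw. destruct (letter_eq_dec a (i, true)) as [Ea|Ea].
    + subst a. destruct w' as [|b v]; [reflexivity|].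
      destruct (letter_eq_dec b (j, true)) as [Eb|Eb].
      * subst b. rewrite red_map by auto. do 2 apply red_tail in Hw. exact Hw.
      * change (negb (inv_pair (i, true) (phi i j b)) && reducedb (map (phi i j) (b :: v)) = true)%bool.
        rewrite red_map by auto. apply red_tail in Hw. rewrite Hw, Bool.andb_true_r.
        destruct (inv_pair (i, true) (phi i j b)) eqn:E; [|reflexivity].
        apply inv_pair_iff in E. simpl in E. apply phi_eq in E; auto.
        exfalso; apply Eb. rewrite E. simpl. rewrite PeanoNat.Nat.eqb_refl. reflexivity.
    + change (negb (inv_pair (i, true) (j, true)) &&
              (negb (inv_pair (j, true) (phi i j a)) && reducedb (map (phi i j) (a :: w'))) = true)%bool.
      rewrite red_map by auto. rewrite Hw.
      unfold inv_pair at 1; simpl. rewrite Bool.andb_false_r. simpl.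
      destruct (inv_pair (j, true) (phi i j a)) eqn:E; [|reflexivity].
      apply inv_pair_iff in E. simpl in E. apply phi_eq in E; auto.
      exfalso; apply Ea. rewrite E. simpl.
      destruct (Nat.eqb j i) eqn:E1; [apply PeanoNat.Nat.eqb_eq in E1; lia|].
      rewrite PeanoNat.Nat.eqb_refl. reflexivity.
Qed.

Lemma map_phi_phi i j w : i <> j -> map (phi i j) (map (phi i j) w) = w.
Proof.
  intros H. rewrite map_map. induction w; simpl; [reflexivity|]. rewrite phi_inv, IHw; auto.
Qed.

Lemma phi_A i j : i <> j -> phi i j (i, true) = (j, false).
Proof. intros H. unfold phi. rewrite PeanoNat.Nat.eqb_refl. reflexivity. Qed.
Lemma phi_B i j : i <> j -> phi i j (j, true) = (i, false).
Proof. intros H. unfold phi. destruct (Nat.eqb j i) eqn:E; [apply PeanoNat.Nat.eqb_eq in E; congruence|].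
  rewrite PeanoNat.Nat.eqb_refl. reflexivity. Qed.

Lemma gw_inv i j w : i <> j -> reducedb w = true -> gw i j (gw i j w) = w.
Proof.
  intros Hij Hw. destruct w as [|a w'].
  - simpl. destruct (letter_eq_dec (i, true) (i, true)) as [_|n]; [|congruence].
    destruct (letter_eq_dec (j, true) (j, true)) as [_|n]; [|congruence]. reflexivity.
  - simpl gw at 2. destruct (letter_eq_dec a (i, true)) as [Ea|Ea].
    + subst a. destruct w' as [|b v].
      * simpl. destruct (letter_eq_dec (i, true) (i, true)) as [_|n]; [|congruence]. reflexivity.
      * destruct (letter_eq_dec b (j, true)) as [Eb|Eb].
        -- subst b. destruct v as [|c v].
           ++ reflexivity.
           ++ simpl. destruct (letter_eq_dec (phi i j c) (i, true)) as [Ec|Ec].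
              ** exfalso. apply phi_eq in Ec; auto. rewrite phi_A in Ec by auto. subst c.
                 simpl in Hw. unfold inv_pair in Hw. simpl in Hw.
                 simpl in Hw. unfold inv_pair in Hw. simpl in Hw. rewrite PeanoNat.Nat.eqb_refl in Hw. simpl in Hw. rewrite Bool.andb_false_r in Hw. discriminate.
              ** rewrite phi_inv, map_phi_phi by auto. reflexivity.
        -- simpl. destruct (letter_eq_dec (i, true) (i, true)) as [_|n]; [|congruence].
           destruct (letter_eq_dec (phi i j b) (j, true)) as [Ec|Ec].
           ++ exfalso. apply phi_eq in Ec; auto. rewrite phi_B in Ec by auto. subst b.
              simpl in Hw. unfold inv_pair in Hw. simpl in Hw.
              rewrite PeanoNat.Nat.eqb_refl in Hw. discriminate.
           ++ rewrite phi_inv, map_phi_phi by auto. reflexivity.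
    + simpl. destruct (letter_eq_dec (i, true) (i, true)) as [_|n]; [|congruence].
      destruct (letter_eq_dec (j, true) (j, true)) as [_|n]; [|congruence].
      rewrite phi_inv, map_phi_phi by auto. reflexivity.
Qed.

Lemma gw_snoc i j s x :
  gw i j (s ++ [x]) = gw i j s ++ [phi i j x] \/ exists y, gw i j s = gw i j (s ++ [x]) ++ [y].
Proof.
  destruct s as [|a [|b v]].
  - simpl. destruct (letter_eq_dec x (i, true)) as [E|E].
    + subst. right. exists (j, true). reflexivity.
    + left. reflexivity.
  - simpl. destruct (letter_eq_dec a (i, true)) as [E|E].
    + destruct (letter_eq_dec x (j, true)) as [E2|E2].
      * right. exists (i, true). reflexivity.
      * left. reflexivity.
    + left. reflexivity.
  - simpl. destruct (letter_eq_dec a (i, true)) as [E|E].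
    + destruct (letter_eq_dec b (j, true)) as [E2|E2].
      * left. rewrite map_app. reflexivity.
      * left. rewrite map_app. reflexivity.
    + left. rewrite map_app. reflexivity.
Qed.

Definition gT (i j : nat) (H : i <> j) (t : T) : T :=
  exist _ (gw i j (word t)) (gw_red i j (word t) H (proj2_sig t)).

Lemma word_eqb_true v w : word_eqb v w = true <-> v = w.
Proof. unfold word_eqb. destruct (list_eq_dec letter_eq_dec v w); split; congruence. Qed.

Lemma parent_iff s t : parent s t <-> exists x, word t = word s ++ [x].
Proof.
  unfold parent, parentb. rewrite Bool.andb_true_iff, word_eqb_true. split.
  - intros [H1 H2]. destruct (word t) as [|x l] eqn:Ew; [discriminate|].
    exists (last (x :: l) x). rewrite H1. apply app_removelast_last. discriminate.
  - intros [x Hx]. rewrite Hx, removelast_last. split; [reflexivity|].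
    destruct (word s); reflexivity.
Qed.

Lemma gT_adj i j H s t : adj s t -> adj (gT i j H s) (gT i j H t).
Proof.
  unfold adj. intros [Hp|Hp]; apply parent_iff in Hp; destruct Hp as [x Hx].
  - destruct (gw_snoc i j (word s) x) as [E|[y E]].
    + left. apply parent_iff. exists (phi i j x). simpl. rewrite Hx. exact E.
    + right. apply parent_iff. exists y. simpl. rewrite Hx. exact E.
  - destruct (gw_snoc i j (word t) x) as [E|[y E]].
    + right. apply parent_iff. exists (phi i j x). simpl. rewrite Hx. exact E.
    + left. apply parent_iff. exists y. simpl. rewrite Hx. exact E.
Qed.

Lemma gT_inv i j H t : gT i j H (gT i j H t) = t.
Proof. apply Teq. simpl. apply gw_inv; auto. exact (proj2_sig t). Qed.

Lemma gT_aut i j H : is_aut (gT i j H) (gT i j H).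
Proof.
  split; [intros; apply gT_inv|]. split; [intros; apply gT_inv|].
  intros s t; split; [apply gT_adj|].
  intros Ha. apply (gT_adj i j H) in Ha. rewrite !gT_inv in Ha. exact Ha.
Qed.

Definition cv (k : nat) : T := exist _ [(k, true)] eq_refl.
Lemma n2_red i j : reducedb [(i, true); (j, true)] = true.
Proof. simpl. unfold inv_pair; simpl. rewrite Bool.andb_false_r. reflexivity. Qed.
Definition n2 (i j : nat) : T := exist _ [(i, true); (j, true)] (n2_red i j).

Lemma gT_c i j H : gT i j H (cv i) = cv i.
Proof. apply Teq. simpl. destruct (letter_eq_dec (i, true) (i, true)); [reflexivity|congruence]. Qed.
Lemma gT_n2 i j H : gT i j H (n2 i j) = root.
Proof.
  apply Teq. simpl. destruct (letter_eq_dec (i, true) (i, true)); [|congruence].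
  destruct (letter_eq_dec (j, true) (j, true)); [reflexivity|congruence].
Qed.

Definition ind (p : T -> bool) : V := fun s => if p s then (1, 0) else C0.
Definition Teqb (s t : T) : bool := if T_eq_dec s t then true else false.
Definition ev (t : T) : V := ind (fun s => Teqb s t).

Lemma lsum_ind p l : lsum (fun t => Cnorm2 (ind p t)) l = INR (length (filter p l)).
Proof.
  induction l as [|a l IH]; [reflexivity|]. cbn [lsum fold_right filter].
  unfold lsum in IH. rewrite IH. unfold ind at 1, Cnorm2 at 1.
  destruct (p a); cbn [length fst snd C0]; [rewrite S_INR|]; unfold C0; simpl fst; simpl snd; lra.
Qed.

Lemma sq_ind p S : (forall s, p s = true -> In s S) -> sqsum_le (ind p) (INR (length S)).
Proof.
  intros HS l Hl. rewrite lsum_ind. apply le_INR. apply NoDup_incl_length.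
  - apply NoDup_filter; auto.
  - intros x Hx. apply filter_In in Hx. apply HS. tauto.
Qed.

Lemma l2_ev t : l2 (ev t).
Proof.
  exists (INR (length [t])). apply sq_ind. intros s Hs. unfold Teqb in Hs.
  destruct (T_eq_dec s t); [left; auto|discriminate].
Qed.

Definition is_c_lt (n : nat) (s : T) : bool :=
  match word s with
  | [(k, true)] => Nat.ltb k n
  | _ => false
  end.
Definition Y (n : nat) : V := ind (is_c_lt n).

Lemma l2_Y n : sqsum_le (Y n) (INR n).
Proof.
  replace (INR n) with (INR (length (map cv (seq 0 n)))) by (rewrite length_map, length_seq; auto).
  apply sq_ind. intros s. unfold is_c_lt.
  destruct (word s) as [|[k b] [|? ?]] eqn:Ew; try discriminate. destruct b; try discriminate.
  intros Hk. apply PeanoNat.Nat.ltb_lt in Hk. apply in_map_iff. exists k. split.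
  - apply Teq. simpl. auto.
  - apply in_seq. lia.
  - destruct b; discriminate.
Qed.

Lemma Y_S n : Y (S n) = vadd (Y n) (ev (cv n)).
Proof.
  apply functional_extensionality. intros s. unfold Y, vadd, ev, ind, Teqb.
  destruct (T_eq_dec s (cv n)) as [E|E].
  - subst. unfold is_c_lt. simpl. rewrite PeanoNat.Nat.ltb_irrefl.
    replace (Nat.ltb n (S n)) with true by (symmetry; apply PeanoNat.Nat.ltb_lt; lia).
    unfold Cadd, C0; simpl. f_equal; ring.
  - replace (is_c_lt (S n) s) with (is_c_lt n s).
    + destruct (is_c_lt n s); unfold Cadd, C0; simpl; f_equal; ring.
    + unfold is_c_lt. destruct (word s) as [|[k b] l] eqn:Ew; [reflexivity|].
      destruct b; [|reflexivity]. destruct l; [|reflexivity].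
      assert (k <> n) by (intro; subst; apply E; apply Teq; simpl; auto).
      destruct (Nat.ltb k n) eqn:E1; destruct (Nat.ltb k (S n)) eqn:E2; auto;
        [apply PeanoNat.Nat.ltb_lt in E1; apply PeanoNat.Nat.ltb_ge in E2; lia|
         apply PeanoNat.Nat.ltb_ge in E1; apply PeanoNat.Nat.ltb_lt in E2; lia].
Qed.

Lemma Y_0 : Y 0 = vadd (Y 0) (Y 0).
Proof.
  apply functional_extensionality. intros s. unfold Y, vadd, ind.
  replace (is_c_lt 0 s) with false.
  - unfold Cadd, C0; simpl; f_equal; ring.
  - unfold is_c_lt. destruct (word s) as [|[k b] l]; [reflexivity|]. destruct b, l; reflexivity.
Qed.

Lemma lsum_ge f l q : (forall t, In t l -> q <= f t) -> INR (length l) * q <= lsum f l.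
Proof.
  induction l as [|a l IH]; intros H; simpl; [lra|].
  assert (H1 := H a (or_introl eq_refl)).
  assert (H2 : INR (length l) * q <= lsum f l) by (apply IH; intros; apply H; right; auto).
  destruct (length l); simpl in *; lra.
Qed.

Lemma archi (r : R) : exists n : nat, r < INR n.
Proof.
  destruct (archimed r) as [H1 _].
  destruct (Z_lt_le_dec (up r) 0) as [Hz|Hz].
  - exists 0%nat. simpl. apply IZR_lt in Hz. lra.
  - exists (Z.to_nat (up r)). rewrite INR_IZR_INZ, Z2Nat.id; auto.
Qed.

Lemma Cnorm2_ge z : fst z * fst z <= Cnorm2 z.
Proof. unfold Cnorm2. destruct z; simpl. nra. Qed.

Theorem mainTheorem17 (D : (T -> T) -> (T -> T) -> V -> V) (HD : commutator_ext D) :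
  (exists Rm : V -> V * V, bounded_right_inverse Rm) /\
  ~ (exists Rm : V -> V * V, bounded_right_inverse Rm /\ equivariant D Rm).
Proof.
  split.
  - exists (fun y => (fun _ => C0, y)). split; [|split].
    + split; split; intros; simpl; try reflexivity; unfold Cadd, Cmul, C0; simpl; f_equal; ring.
    + exists 1. intros x M HM l1 l2 N1 N2. simpl.
      assert (E : lsum (fun _ => Cnorm2 C0) l1 = 0).
      { induction l1; simpl; [reflexivity|]. inversion N1; subst. rewrite IHl1 by auto.
        unfold Cnorm2, C0; simpl; ring. }
      rewrite E. specialize (HM l2 N2). lra.
    + reflexivity.
  - intros [Rm [[[[Hadd Hsc] _] [[K HK] Hsnd]] Heq]].
    set (P := fun y => fst (Rm y)).
    assert (Step1 : forall i j (Hij : i <> j),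
      fst (P (ev (cv i)) (n2 i j)) = fst (P (ev (cv i)) root) + 1).
    { intros i j Hij. set (g := gT i j Hij).
      assert (Ha : is_aut g g) by apply gT_aut.
      assert (Hu : ug g (ev (cv i)) = ev (cv i)).
      { apply functional_extensionality. intros s. unfold ug, ev, ind, Teqb.
        destruct (T_eq_dec (g s) (cv i)) as [E1|E1]; destruct (T_eq_dec s (cv i)) as [E2|E2];
          auto; exfalso.
        - apply E2. transitivity (g (g s)); [symmetry; apply gT_inv|]. rewrite E1. apply gT_c.
        - apply E1. rewrite E2. apply gT_c. }
      assert (Hs : snd (Rm (ev (cv i))) = ev (cv i)).
      { apply functional_extensionality. intros s. apply Hsnd. apply l2_ev. }
      destruct (HD g g Ha) as [_ [_ Hform]].
      assert (Hsup : supported_in (ev (cv i)) [cv i]).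
      { intros t Ht. unfold ev, ind, Teqb. destruct (T_eq_dec t (cv i)); auto.
        exfalso; apply Ht; left; auto. }
      assert (HN : NoDup [cv i]) by (constructor; [auto|constructor]).
      specialize (Hform _ _ HN Hsup (n2 i j)).
      destruct (Heq g g Ha (ev (cv i)) (l2_ev _) (n2 i j)) as [H1 _].
      unfold lam in H1. cbn [fst snd] in H1. rewrite Hs, Hu in H1.
      unfold vadd in H1. rewrite Hform in H1.
      assert (Gn : g (n2 i j) = root) by apply gT_n2.
      assert (Gc : g (cv i) = cv i) by apply gT_c.
      simpl map in H1. rewrite Gc, Hu in H1. unfold ug in H1. rewrite Gn in H1.
      unfold Lfs, Csum in H1. simpl fold_right in H1.
      assert (E1 : parentb root (cv i) = true) by reflexivity.
      assert (E2 : parentb (n2 i j) (cv i) = false) by reflexivity.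
      try rewrite E1, E2 in H1.
      assert (E3 : ev (cv i) (cv i) = (1, 0)).
      { unfold ev, ind, Teqb. destruct (T_eq_dec (cv i) (cv i)); congruence. }
      rewrite E3 in H1. apply (f_equal fst) in H1. unfold P.
      unfold Cadd, Csub, C0 in H1. simpl in H1. lra. }
    assert (Step2 : forall i, fst (P (ev (cv i)) root) = -1).
    { intros i. set (p := fst (P (ev (cv i)) root)).
      assert (HB : forall N, INR N * ((p + 1) * (p + 1)) <= K * 1).
      { intros N.
        assert (Hs1 : sqsum_le (ev (cv i)) 1).
        { change 1 with (INR (length [cv i])). apply sq_ind. intros s Hs. unfold Teqb in Hs.
          destruct (T_eq_dec s (cv i)); [left; auto|discriminate]. }
        set (l := map (n2 i) (seq (S i) N)).
        assert (Hl : NoDup l).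
        { apply Injective_map_NoDup; [|apply seq_NoDup].
          intros a b Hab. apply (f_equal word) in Hab. simpl in Hab. congruence. }
        specialize (HK _ _ Hs1 l [] Hl (NoDup_nil _)). simpl in HK.
        replace N with (length l) by (unfold l; rewrite length_map, length_seq; auto).
        eapply Rle_trans; [|exact (Rle_trans _ _ _ (Req_le _ _ (eq_sym (Rplus_0_r _))) HK)].
        apply lsum_ge. intros t Ht. unfold l in Ht. apply in_map_iff in Ht.
        destruct Ht as [j [<- Hj]]. apply in_seq in Hj.
        eapply Rle_trans; [|apply Cnorm2_ge].
        fold (P (ev (cv i))). rewrite Step1 by lia. fold p. lra. }
      destruct (Req_dec (p + 1) 0) as [E|E]; [lra|exfalso].
      assert (Hq : 0 < (p + 1) * (p + 1)) by nra.
      destruct (archi (K / ((p + 1) * (p + 1)))) as [N HN].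
      specialize (HB N). apply (Rmult_lt_compat_r ((p + 1) * (p + 1))) in HN; auto.
      unfold Rdiv in HN. rewrite Rmult_assoc, Rinv_l in HN by lra. lra. }
    assert (HY : forall n, fst (P (Y n) root) = - INR n).
    { induction n as [|n IH].
      - assert (E := Hadd (Y 0) (Y 0) (ex_intro _ _ (l2_Y 0)) (ex_intro _ _ (l2_Y 0)) root).
        rewrite <- Y_0 in E. apply (f_equal fst) in E. unfold Cadd in E. simpl in E.
        unfold P. simpl. lra.
      - unfold P. rewrite Y_S.
        rewrite (Hadd _ _ (ex_intro _ _ (l2_Y n)) (l2_ev _) root).
        unfold Cadd; cbn [fst]. rewrite S_INR. fold (P (Y n)). fold (P (ev (cv n))).
        rewrite IH, Step2. lra. }
    destruct (archi (Rabs K)) as [n Hn].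
    assert (HN : NoDup [root]) by (constructor; [auto|constructor]).
    specialize (HK _ _ (l2_Y n) [root] [] HN (NoDup_nil _)). simpl in HK.
    assert (Hc := Cnorm2_ge (fst (Rm (Y n)) root)).
    fold (P (Y n)) in Hc, HK. rewrite HY in Hc.
    assert (0 <= INR n) by apply pos_INR.
    assert (K <= Rabs K) by apply Rle_abs.
    assert (0 <= Rabs K) by apply Rabs_pos. assert (0 < (INR n - Rabs K) * INR n) by (apply Rmult_lt_0_compat; lra). nra.
Qed.
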